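(* For every graph $G$ with $\chi(G)>3$, $W(G)>\frac{1}{16}\,g(G)$.
   Context: $\chi(G)$ is the chromatic number and $g(G)$ the girth (minimum length of a cycle) of $G$; $K_3$ is the complete graph on 3 vertices. Graphs are viewed as structures with adjacency relation $E$ and equality. For a graph $G$ with $\chi(G)>3$, $W(G)$ is the least $k$ such that some existential-positive first-order sentence (built from atomic formulas $x=y$, $E(x,y)$ using only $\wedge$, $\vee$ and $\exists$) in which at most $k$ distinct variables occur is true in $G$ and false in $K_3$. Equivalently, $W(G)$ is the least $k$ such that for some $r$ Spoiler has a winning strategy in the $r$-round $k$-width 3-coloring game on $G$: in each round Spoiler may erase the colors of some colored vertices and then selects a vertex, which Duplicator colors red, blue or green; at most $k$ vertices may be colored after each round; Duplicator wins if after every round the partial coloring is proper. *)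

(* Defs.v *)
From mathcomp Require Import all_boot.
Set Implicit Arguments. Unset Strict Implicit. Unset Printing Implicit Defensive.

(* A (finite, simple) graph: vertex type T : finType with adjacency e : rel T,
   required (in the theorem) to be symmetric and irreflexive. *)

Definition colorable (T : finType) (e : rel T) (n : nat) : Prop :=
  exists c : T -> 'I_n, forall x y, e x y -> c x != c y.

Definition has_cycle_of_length (T : finType) (e : rel T) (l : nat) : Prop :=
  exists p : seq T, [/\ size p = l, 3 <= l, uniq p & cycle e p].

Definition is_girth (T : finType) (e : rel T) (g : nat) : Prop :=
  has_cycle_of_length e g /\ forall l, has_cycle_of_length e l -> g <= l.

Inductive epf : Type :=
| EPEq   : nat -> nat -> epf
| EPEdge : nat -> nat -> epf
| EPAnd  : epf -> epf -> epf
| EPOr   : epf -> epf -> epf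
| EPEx   : nat -> epf -> epf.

Fixpoint holds (T : Type) (e : rel T) (s : nat -> T) (f : epf) : Prop :=
  match f with
  | EPEq x y => s x = s y
  | EPEdge x y => e (s x) (s y)
  | EPAnd f1 f2 => holds e s f1 /\ holds e s f2
  | EPOr f1 f2 => holds e s f1 \/ holds e s f2
  | EPEx x f1 => exists a : T, holds e (fun z => if z == x then a else s z) f1
  end.

Fixpoint vars (f : epf) : seq nat :=
  match f with
  | EPEq x y | EPEdge x y => [:: x; y]
  | EPAnd f1 f2 | EPOr f1 f2 => vars f1 ++ vars f2
  | EPEx x f1 => x :: vars f1
  end.

Fixpoint free_vars (f : epf) : seq nat :=
  match f with
  | EPEq x y | EPEdge x y => [:: x; y]
  | EPAnd f1 f2 | EPOr f1 f2 => free_vars f1 ++ free_vars f2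
  | EPEx x f1 => filter (fun z => z != x) (free_vars f1)
  end.

Definition is_sentence (f : epf) : Prop := free_vars f = [::].

Definition num_vars (f : epf) : nat := size (undup (vars f)).

(* A sentence is true in (T, e); for sentences the assignment is irrelevant,
   we use "for every assignment". *)
Definition sat (T : Type) (e : rel T) (f : epf) : Prop :=
  forall s : nat -> T, holds e s f.

Definition K3 : rel 'I_3 := fun x y => x != y.

Definition W_witness (T : finType) (e : rel T) (k : nat) : Prop :=
  exists f : epf, [/\ is_sentence f, num_vars f <= k, sat e f & ~ sat K3 f].

Definition is_W (T : finType) (e : rel T) (w : nat) : Prop :=
  W_witness e w /\ forall k, W_witness e k -> w <= k.

(* Main.v *)
Require Import Defs.
From mathcomp Require Import all_boot.
From Stdlib Require Import Classical.
From mathcomp Require Import zify.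
Set Implicit Arguments. Unset Strict Implicit. Unset Printing Implicit Defensive.

Definition deg (T : finType) (e : rel T) (Z : {set T}) (x : T) := #|[set y in Z | e x y]|.

Lemma size_le_card (T : finType) (Z : {set T}) (s : seq T) :
  uniq s -> all (mem Z) s -> size s <= #|Z|.
Proof.
move=> us /allP aZ; rewrite -(card_uniqP us); apply: subset_leq_card.
by apply/subsetP => x /aZ.
Qed.

Lemma no_chord (T : finType) (e : rel T) (esym : symmetric e) (g : nat)
  (hgir : forall l, has_cycle_of_length e l -> g <= l) (Z : {set T})
  (hZ : #|Z| < g) x q y :
  x \in Z -> all (mem Z) q -> uniq (x :: q) -> path e x q -> y \in q -> e x y ->
  exists q2, q = y :: q2.
Proof.
move=> xZ qZ uq pq yq exy.
case/splitPr: yq uq pq qZ => q1 q2 uq pq qZ.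
case: q1 uq pq qZ => [|a q1] uq pq qZ; first by exists q2.
exfalso.
set p := x :: rcons (a :: q1) y.
have up : uniq p.
  move: uq; rewrite /p -cat_cons -cat_rcons cat_uniq; by case/andP.
have cp : cycle e p.
  rewrite /p /cycle rcons_path last_rcons esym exy andbT.
  move: pq; rewrite cat_path => /andP [p1 /= /andP [h _]].
  by move: p1 => /= /andP [-> p1]; rewrite rcons_path p1 h.
have sp : size p <= #|Z|.
  apply: size_le_card => //.
  move: qZ; rewrite /p /= xZ /= all_cat all_rcons /=.
  by case/and4P=> -> -> -> _.
have := hgir (size p).
have : has_cycle_of_length e (size p).
  exists p; split=> //; by rewrite /p /= size_rcons.
move=> H /(_ H). move: hZ sp; clear. lia.
Qed.

Lemma leaf (T : finType) (e : rel T) (esym : symmetric e) (eirr : irreflexive e) (g : nat)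
  (hgir : forall l, has_cycle_of_length e l -> g <= l) (Z : {set T})
  (hZ : #|Z| < g) : Z != set0 -> exists2 z, z \in Z & deg e Z z <= 1.
Proof.
case/set0Pn => z0 z0Z.
case: (boolP [exists z in Z, deg e Z z <= 1]).
  by case/exists_inP => z zZ hz; exists z.
move/exists_inPn => H.
have H2 : forall z, z \in Z -> 2 <= deg e Z z by move=> z /H; rewrite leqNgt negbK.
suff : forall n, exists x q, [/\ size q = n.+1, x \in Z, all (mem Z) q,
                              uniq (x :: q) & path e x q].
  move/(_ #|Z|) => [x [q [sq xZ qZ uq _]]].
  have := @size_le_card _ Z _ uq; rewrite /= xZ qZ sq => /(_ isT); lia.
elim=> [|n [x [q [sq xZ qZ uq pq]]]].
  have : 0 < deg e Z z0 by have := H2 _ z0Z; lia.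
  rewrite /deg card_gt0; case/set0Pn => y; rewrite inE => /andP [yZ ezy].
  exists y, [:: z0]; split => //=; first by rewrite z0Z.
    rewrite andbT inE; apply/eqP => eyz; by rewrite eyz eirr in ezy.
  by rewrite esym ezy.
case: q sq qZ uq pq => [//|h q'] sq qZ uq pq.
have : ~~ ([set y in Z | e x y] \subset [set h]).
  apply/negP => /subset_leq_card; rewrite cards1.
  have := H2 _ xZ; rewrite /deg; lia.
case/subsetPn => y; rewrite !inE => /andP [yZ exy] yh.
have yq : y \notin x :: h :: q'.
  rewrite in_cons negb_or; apply/andP; split.
    apply/eqP => eyx; by rewrite eyx eirr in exy.
  apply/negP => yq.
  have [q2 hq] := no_chord esym hgir hZ xZ qZ uq pq yq exy.
  by case: hq yh => ->; rewrite eqxx.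
exists y, (x :: h :: q'); split => //=.
- by move: sq => /= ->.
- by rewrite xZ.
- by rewrite yq.
- by rewrite esym exy.
Qed.

Lemma degsum (T : finType) (e : rel T) (esym : symmetric e) (eirr : irreflexive e) (g : nat)
  (hgir : forall l, has_cycle_of_length e l -> g <= l) :
  forall n (Z : {set T}), #|Z| = n -> #|Z| < g -> \sum_(x in Z) deg e Z x <= 2 * #|Z|.
Proof.
elim=> [|n IH] Z cZ hZ.
  have -> : Z = set0 by apply/eqP; rewrite -cards_eq0 cZ.
  by rewrite big_set0.
have Zn0 : Z != set0 by rewrite -card_gt0 cZ.
have [z zZ dz] := leaf esym eirr hgir hZ Zn0.
set Z' := Z :\ z.
have cZ' : #|Z| = #|Z'|.+1 by rewrite (cardsD1 z Z) zZ.
have hd : forall x, x \in Z' -> deg e Z x = e x z + deg e Z' x.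
  move=> x xZ'; rewrite /deg (cardsD1 z) !inE zZ /=; congr (_ + _).
  apply: eq_card => y; rewrite !inE; by case: (y == z); rewrite ?andbF.
rewrite (big_setD1 z zZ) /= -/Z' (eq_bigr _ hd) big_split /=.
have IH' : \sum_(x in Z') deg e Z' x <= 2 * #|Z'|.
  by apply: IH; lia.
have hs : \sum_(i in Z') (e i z : nat) <= deg e Z z.
  rewrite (eq_bigr (fun i => if e i z then 1 else 0)); last by move=> i _; case: (e i z).
  rewrite -big_mkcondr sum1_card /deg; apply: subset_leq_card; apply/subsetP => y.
  rewrite unfold_in /= !inE => /andP [/andP [_ yZ] eyz].
  by rewrite yZ esym eyz.
lia.
Qed.

Definition properon (T : finType) (e : rel T) (Z : {set T}) (c : T -> 'I_3) :=
  forall x y, x \in Z -> y \in Z -> e x y -> c x != c y.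
Definition extends (T : finType) (e : rel T) (S Z : {set T}) (c : T -> 'I_3) :=
  exists c', properon e Z c' /\ forall x, x \in S -> c' x = c x.

Lemma properon_sub (T : finType) (e : rel T) (Z Z' : {set T}) c :
  Z' \subset Z -> properon e Z c -> properon e Z' c.
Proof. move=> /subsetP sZ pc x y xZ yZ; apply: pc; exact: sZ. Qed.

Lemma free_color (A : {set 'I_3}) : #|A| <= 2 -> exists b, b \notin A.
Proof.
move=> hA; have : 0 < #|~: A| by have := cardsC A; rewrite card_ord; lia.
by case/card_gt0P => b; rewrite inE => ?; exists b.
Qed.

Lemma XSU (T : finType) (X S : {set T}) : (X :\: S) :|: S = X :|: S.
Proof. by apply/setP => x; rewrite !inE; case: (x \in S); rewrite ?orbT ?andbT. Qed.

Lemma forest_small (T : finType) (e : rel T) (esym : symmetric e) (eirr : irreflexive e) (g : nat)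
  (hgir : forall l, has_cycle_of_length e l -> g <= l) (S X : {set T}) :
  #|X :|: S| < g -> (forall x, x \in X :\: S -> 3 <= deg e (X :|: S) x) ->
  #|X :\: S| <= 2 * #|S|.
Proof.
move=> hg H.
have hs := degsum esym eirr hgir (erefl _) hg.
rewrite (big_setID (X :\: S)) /= in hs.
have E : (X :|: S) :&: (X :\: S) = X :\: S.
  by apply/setP => x; rewrite !inE; case: (x \in S); case: (x \in X).
rewrite E in hs.
have h3 : \sum_(i in X :\: S) 3 <= \sum_(i in X :\: S) deg e (X :|: S) i.
  by apply: leq_sum.
rewrite sum_nat_const in h3.
have hc : #|X :|: S| <= #|X :\: S| + #|S|.
  by rewrite -XSU cardsU; lia.
lia.
Qed.

Lemma forest_step (T : finType) (e : rel T) (esym : symmetric e) (eirr : irreflexive e)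
  (S X : {set T}) c x :
  x \in X :\: S -> deg e (X :|: S) x <= 2 -> extends e S ((X :\ x) :|: S) c ->
  extends e S (X :|: S) c.
Proof.
move=> xXS dx [c' [pc' ac']].
have xS : x \notin S by move: xXS; rewrite inE => /andP [].
set N := [set y in X :|: S | e x y].
have [b hb] := @free_color (c' @: N) (leq_trans (leq_imset_card _ _) dx).
have inZ' : forall u, u \in X :|: S -> u != x -> u \in (X :\ x) :|: S.
  by move=> u; rewrite !inE => /orP [->|->] ->; rewrite ?orbT.
exists (fun z => if z == x then b else c' z); split.
- move=> u v uZ vZ euv.
  case: (eqVneq u x) => [ux|ux]; case: (eqVneq v x) => [vx|vx].
  + by rewrite ux vx eirr in euv.
  + apply/eqP => E; move: hb; rewrite E; apply/negP/negPn; apply: imset_f.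
    by rewrite inE vZ -ux euv.
  + apply/eqP => E; move: hb; rewrite -E; apply/negP/negPn; apply: imset_f.
    by rewrite inE uZ -vx esym euv.
  + by apply: pc' => //; apply: inZ'.
- move=> z zS; have zx : z != x by apply/eqP => E; rewrite -E zS in xS.
  by rewrite (negPf zx) ac'.
Qed.

Lemma forest (T : finType) (e : rel T) (esym : symmetric e) (eirr : irreflexive e) (g : nat)
  (hgir : forall l, has_cycle_of_length e l -> g <= l) (S : {set T}) (c : T -> 'I_3) :
  forall n (X : {set T}), #|X :\: S| <= n -> #|X :|: S| < g ->
  (forall Y : {set T}, Y \subset X -> #|Y| <= 2 * #|S| -> extends e S (Y :|: S) c) ->
  extends e S (X :|: S) c.
Proof.
elim=> [|n IH] X hn hg H.
  have -> : X :|: S = (X :\: S) :|: S by rewrite XSU.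
  apply: H; first by apply/subsetP => x; rewrite inE => /andP [].
  lia.
case: (boolP [exists x in X :\: S, deg e (X :|: S) x <= 2]).
  case/exists_inP => x xXS dx.
  apply: (forest_step esym eirr xXS dx).
  have hsub : X :\ x \subset X by apply/subsetP => y; rewrite inE => /andP [].
  apply: IH.
  - have := cardsD1 x (X :\: S); rewrite xXS.
    have -> : (X :\: S) :\ x = (X :\ x) :\: S.
      by apply/setP => y; rewrite !inE; case: (y == x); case: (y \in S).
    lia.
  - apply: leq_ltn_trans hg; apply: subset_leq_card; exact: setSU.
  - move=> Y hY; apply: H; exact: subset_trans hsub.
move/exists_inPn => H3.
have hs := forest_small esym eirr hgir hg.
have -> : X :|: S = (X :\: S) :|: S by rewrite XSU.
apply: H; first by apply/subsetP => x; rewrite inE => /andP [].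
apply: hs => x /H3; rewrite leqNgt negbK.
done.
Qed.

Definition Inv (T : finType) (e : rel T) (M : nat) (S : {set T}) (c : T -> 'I_3) :=
  forall X : {set T}, #|X| <= M -> extends e S (X :|: S) c.

Lemma inv_sub (T : finType) (e : rel T) M (S S' : {set T}) c c' :
  S' \subset S -> (forall x, x \in S' -> c' x = c x) -> Inv e M S c -> Inv e M S' c'.
Proof.
move=> sS ag H X hX; have [c'' [p a]] := H X hX; exists c''; split.
  by apply: properon_sub p; exact: setUS.
by move=> x xS'; rewrite a ?ag //; exact: (subsetP sS).
Qed.

Lemma inv_ext (T : finType) (e : rel T) (esym : symmetric e) (eirr : irreflexive e) (g : nat)
  (hgir : forall l, has_cycle_of_length e l -> g <= l) M (S : {set T}) c v :
  v \notin S -> 2 * #|S| <= M -> 3 * M + 1 + #|S| < g -> Inv e M S c ->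
  exists b, Inv e M (v |: S) (fun z => if z == v then b else c z).
Proof.
move=> vS hM hg H.
apply: NNPP => Hn.
have Hb : forall b, exists X : {set T}, #|X| <= M /\
    ~ extends e (v |: S) (X :|: (v |: S)) (fun z => if z == v then b else c z).
  move=> b; apply: NNPP => Hx; apply: Hn; exists b => X hX; apply: NNPP => Hy.
  by apply: Hx; exists X; split.
have [X0 [h0 n0]] := Hb (@Ordinal 3 0 isT).
have [X1 [h1 n1]] := Hb (@Ordinal 3 1 isT).
have [X2 [h2 n2]] := Hb (@Ordinal 3 2 isT).
set X := v |: (X0 :|: X1 :|: X2).
have cX : #|X| <= 3 * M + 1.
  rewrite /X cardsU1 !cardsU; case: (v \notin _) => /=; lia.
have : extends e S (X :|: S) c.
  apply: (forest esym eirr hgir (n := #|X|)).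
  - by apply: subset_leq_card; apply: subsetDl.
  - rewrite cardsU; lia.
  - move=> Y _ hY; apply: H; lia.
case=> c' [pc' ac'].
have key : forall Xb : {set T}, Xb \subset X ->
   extends e (v |: S) (Xb :|: (v |: S)) (fun z => if z == v then c' v else c z).
  move=> Xb sXb; exists c'; split.
    apply: properon_sub pc'; apply/subsetP => z; rewrite !inE => /orP [zX|/orP [/eqP ->|->]].
    - by have := subsetP sXb z zX; rewrite /X !inE => ->; rewrite ?orbT.
    - by rewrite eqxx.
    - by rewrite orbT.
  move=> z; rewrite !inE; case: (eqVneq z v) => [->|zv] //= zS.
  exact: ac'.
have s0 : X0 \subset X by apply/subsetP => z zX; rewrite /X !inE zX ?orbT.
have s1 : X1 \subset X by apply/subsetP => z zX; rewrite /X !inE zX ?orbT.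
have s2 : X2 \subset X by apply/subsetP => z zX; rewrite /X !inE zX ?orbT.
case E: (c' v) => [[|[|[|m]]] hm] //.
- apply: n0; have := key _ s0; rewrite E; by have -> : Ordinal hm = @Ordinal 3 0 isT by apply: val_inj.
- apply: n1; have := key _ s1; rewrite E; by have -> : Ordinal hm = @Ordinal 3 1 isT by apply: val_inj.
- apply: n2; have := key _ s2; rewrite E; by have -> : Ordinal hm = @Ordinal 3 2 isT by apply: val_inj.
Qed.

Lemma holds_ext (T : Type) (e : rel T) f : forall s s',
  (forall z, z \in free_vars f -> s z = s' z) -> holds e s f -> holds e s' f.
Proof.
elim: f => [x y|x y|f1 IH1 f2 IH2|f1 IH1 f2 IH2|x f1 IH] s s' H /=.
- by rewrite (H x) ?(H y) // !inE eqxx ?orbT.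
- by rewrite (H x) ?(H y) // !inE eqxx ?orbT.
- case=> h1 h2; split; [apply: (IH1 s) | apply: (IH2 s)] => // z hz; apply: H;
    by rewrite /= mem_cat hz ?orbT.
- case=> h; [left; apply: (IH1 s) | right; apply: (IH2 s)] => // z hz; apply: H;
    by rewrite /= mem_cat hz ?orbT.
- case=> a h; exists a; apply: (IH _ _ _ h) => z hz.
  case: (eqVneq z x) => // zx; apply: H; by rewrite /= mem_filter zx.
Qed.

Definition SV (T : finType) (s : nat -> T) (V : seq nat) : {set T} := [set y | y \in map s V].

Lemma main_ind (T : finType) (e : rel T) (esym : symmetric e) (eirr : irreflexive e) (g : nat)
  (hgir : forall l, has_cycle_of_length e l -> g <= l) M k (V : seq nat) :
  2 * k <= M -> 3 * M + k < g -> size V <= k ->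
  forall f, {subset vars f <= V} -> forall s t,
  (exists c, (forall x, x \in V -> t x = c (s x)) /\ Inv e M (SV s V) c) ->
  holds e s f -> holds K3 t f.
Proof.
move=> hM hg hV.
elim=> [x y|x y|f1 IH1 f2 IH2|f1 IH1 f2 IH2|x f1 IH] hvars s t [c [Hc Hi]] /=.
- have xV : x \in V by apply: hvars; rewrite !inE eqxx.
  have yV : y \in V by apply: hvars; rewrite !inE eqxx ?orbT.
  by rewrite (Hc x xV) (Hc y yV) => ->.
- have xV : x \in V by apply: hvars; rewrite !inE eqxx.
  have yV : y \in V by apply: hvars; rewrite !inE eqxx ?orbT.
  have [c' [pc' ac']] := Hi set0 (leq_trans (eq_leq (cards0 _)) (leq0n _)).
  have sx : s x \in SV s V by rewrite inE map_f.
  have sy : s y \in SV s V by rewrite inE map_f.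
  move=> exy; rewrite /K3 (Hc x xV) (Hc y yV) -(ac' _ sx) -(ac' _ sy).
  by apply: pc' => //; rewrite set0U.
- have h1 : {subset vars f1 <= V} by move=> z hz; apply: hvars; rewrite mem_cat hz.
  have h2 : {subset vars f2 <= V} by move=> z hz; apply: hvars; rewrite mem_cat hz orbT.
  by case=> a1 a2; split; [apply: (IH1 h1 s) | apply: (IH2 h2 s)] => //; exists c.
- have h1 : {subset vars f1 <= V} by move=> z hz; apply: hvars; rewrite mem_cat hz.
  have h2 : {subset vars f2 <= V} by move=> z hz; apply: hvars; rewrite mem_cat hz orbT.
  by case=> a; [left; apply: (IH1 h1 s) | right; apply: (IH2 h2 s)] => //; exists c.
have xV : x \in V by apply: hvars; rewrite !inE eqxx.
have h1 : {subset vars f1 <= V} by move=> z hz; apply: hvars; rewrite inE hz orbT.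
case=> a ha.
set S0 := [set y | y \in map s (filter (predC1 x) V)].
have sS0 : S0 \subset SV s V.
  apply/subsetP => y; rewrite !inE => /mapP [z]; rewrite mem_filter => /andP [_ zV] ->.
  exact: map_f.
have Hi0 : Inv e M S0 c by apply: inv_sub sS0 _ Hi.
have cS0 : #|S0| < k.
  rewrite /S0 cardsE; apply: (leq_ltn_trans (card_size _)); rewrite size_map size_filter.
  have hc := count_predC (predC1 x) V.
  have : has (predC (predC1 x)) V by apply/hasP; exists x => //=; rewrite negbK.
  rewrite has_count => h0; apply: leq_trans hV; rewrite -hc -addn1 leq_add2l; exact: h0.
have [b [hb Hib]] : exists b, (a \in S0 -> b = c a) /\
    Inv e M (a |: S0) (fun z => if z == a then b else c z).
  case: (boolP (a \in S0)) => aS0.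
    exists (c a); split => //.
    apply: (inv_sub (S := S0) (c := c)) => //.
      apply/subsetP => z; rewrite !inE => /orP [/eqP ->|] //; by move: aS0; rewrite inE.
    by move=> z _; case: (eqVneq z a) => [->|].
  have hM0 : 2 * #|S0| <= M by lia.
  have hg0 : 3 * M + 1 + #|S0| < g by lia.
  have [b Hb] := inv_ext esym eirr hgir aS0 hM0 hg0 Hi0.
  by exists b; split.
exists b; apply: (IH h1 (fun z => if z == x then a else s z)) => //.
exists (fun z => if z == a then b else c z); split.
  move=> y yV; case: (eqVneq y x) => [_|yx]; first by rewrite eqxx.
  rewrite (Hc y yV); case: (eqVneq (s y) a) => [E|] //.
  rewrite hb -E // inE; apply: map_f; by rewrite mem_filter /= yx.
apply: inv_sub Hib => //; apply/subsetP => y; rewrite !inE => /mapP [z zV ->].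
case: (eqVneq z x) => [_|zx]; first by rewrite eqxx.
by rewrite map_f ?orbT // mem_filter /= zx.
Qed.

Lemma vars_ne f : exists x, x \in vars f.
Proof.
elim: f => [x y|x y|f1 [x hx] f2 _|f1 [x hx] f2 _|x f1 _] /=;
  by [exists x; rewrite inE eqxx | exists x; rewrite mem_cat hx].
Qed.

Lemma num_vars_gt0 f : 0 < num_vars f.
Proof.
have [x hx] := vars_ne f; rewrite /num_vars.
case E: (undup (vars f)) => [|//]; by rewrite -mem_undup E in hx.
Qed.

Theorem theorem4 (T : finType) (e : rel T)
    (e_sym : symmetric e) (e_irr : irreflexive e)
    (chi_gt3 : forall n, colorable e n -> 3 < n)
    (w g : nat) (hw : is_W e w) (hg : is_girth e g) :
  g < 16 * w.
Proof.
case: hw => [[f [sent nv satG nsatK]] _].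
case: hg => [[p [sp l3 up cp]] hgir].
rewrite ltnNge; apply/negP => hle.
have w1 := leq_trans (num_vars_gt0 f) nv.
case: p sp up cp => [|v0 p'] sp up cp; first by move: l3; rewrite -sp.
set M := 2 * w.
set c0 : T -> 'I_3 := fun _ => ord0.
have I0 : Inv e M set0 c0.
  move=> X hX; apply: (forest e_sym e_irr hgir (n := #|X|)).
  - by apply: subset_leq_card; apply: subsetDl.
  - rewrite setU0; lia.
  - move=> Y _; rewrite cards0 leqn0 cards_eq0 => /eqP ->.
    by exists c0; split => // x y; rewrite setU0 inE.
have [b Ib] := inv_ext e_sym e_irr hgir (M := M) (ltac:(by rewrite in_set0) : v0 \notin set0) (ltac:(rewrite cards0; lia))
  (ltac:(rewrite cards0; lia)) I0.
apply: nsatK => t.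
apply: (holds_ext (s := fun _ => b)); first by rewrite sent.
have h1 : 2 * w <= M by [].
have h2 : 3 * M + w < g by rewrite /M; lia.
have h3 : {subset vars f <= undup (vars f)} by move=> z; rewrite mem_undup.
apply: (main_ind e_sym e_irr hgir h1 h2 nv h3 (s := fun _ => v0)); last exact: satG.
exists (fun z => if z == v0 then b else c0 z); split; first by move=> x _; rewrite eqxx.
apply: inv_sub Ib => //; apply/subsetP => y; rewrite !inE => /mapP [z _ ->].
by rewrite eqxx.
Qed.
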